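(* Let $\tilde X\in\mathbb{R}^{n\times k}$ have columns of unit Euclidean norm (i.e. $\Gamma_{\ell\ell}=1$ for all $\ell$, where $\Gamma=\tilde X^t\tilde X$). Let $0<\nu<1$ and let $\mathcal{I}\subset\{1,\dots,k\}$ satisfy $\tau(\mathcal{I})\le\nu$. Then for every $x\in\mathbb{R}^{\#(\mathcal{I})}$, $$\|x\|_2^2(1-\nu)\le x^t\,\Gamma_{\mathcal{I}}\,x\le \|x\|_2^2(1+\nu).$$
   Context: $\mathcal{G}_1,\dots,\mathcal{G}_p$ is a partition of $\{1,\dots,k\}$ into groups with $t_j=\#\mathcal{G}_j$; each index $\ell$ is written $\ell=(j,t)$ with $j$ the group containing $\ell$ and $t\in\{1,\dots,t_j\}$ its rank inside $\mathcal{G}_j$. $\Gamma_{\mathcal{I}}=\tilde X_{\mathcal{I}}^t\tilde X_{\mathcal{I}}$ where $\tilde X_{\mathcal{I}}$ is the submatrix of columns indexed by $\mathcal{I}$. $\gamma_{BT}=\sup\{|\Gamma_{(j,t)(j',t')}|: t\neq t'\}$ (over all $j,j'$ and admissible ranks), $\gamma_{BG}=\sup\{|\Gamma_{(j,t)(j',t)}|: j\ne j',\ t\le t_j\wedge t_{j'}\}$, and $\tau(\mathcal{I})=\#(\mathcal{I})\,\gamma_{BT}+\#\{j:\exists t,\ (j,t)\in\mathcal{I}\}\,\gamma_{BG}$. *)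

(* Defs.v *)
From mathcomp Require Import all_boot all_order all_algebra.
Set Implicit Arguments. Unset Strict Implicit. Unset Printing Implicit Defensive.
Import Order.TTheory GRing.Theory Num.Theory.
Local Open Scope ring_scope.

(* Group structure: g l = group of index l, rk l = rank of l inside its group
   (0-based: rk l \in {0, .., t_{g l} - 1}). *)
Definition group_size k p (g : 'I_k -> 'I_p) (j : 'I_p) : nat :=
  #|[set l | g l == j]|.

Definition is_group_partition k p (g : 'I_k -> 'I_p) (rk : 'I_k -> nat) : Prop :=
  (forall j : 'I_p, exists l, g l = j) /\
  (forall l, (rk l < group_size g (g l))%N) /\
  (forall l l', g l = g l' -> rk l = rk l' -> l = l').

Definition Gram (R : realFieldType) n k (X : 'M[R]_(n, k)) : 'M[R]_k := X^T *m X.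

Definition gamma_BT (R : realFieldType) k (rk : 'I_k -> nat) (G : 'M[R]_k) : R :=
  \big[Num.max/0]_(l : 'I_k) \big[Num.max/0]_(l' : 'I_k | rk l != rk l') `|G l l'|.

Definition gamma_BG (R : realFieldType) k p (g : 'I_k -> 'I_p) (rk : 'I_k -> nat)
  (G : 'M[R]_k) : R :=
  \big[Num.max/0]_(l : 'I_k) \big[Num.max/0]_(l' : 'I_k | (g l != g l') && (rk l == rk l'))
     `|G l l'|.

Definition tau (R : realFieldType) k p (g : 'I_k -> 'I_p) (rk : 'I_k -> nat)
  (G : 'M[R]_k) (I : {set 'I_k}) : R :=
  #|I|%:R * gamma_BT rk G + #|g @: I|%:R * gamma_BG g rk G.

(* principal submatrix Gamma_I, indices of I in increasing order *)
Definition subGram (R : realFieldType) k (G : 'M[R]_k) (I : {set 'I_k}) : 'M[R]_#|I| :=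
  \matrix_(a < #|I|, b < #|I|) G (enum_val a) (enum_val b).

Definition sqnorm (R : realFieldType) m (x : 'cV[R]_m) : R := \sum_(a < m) x a 0 ^+ 2.

Definition qform (R : realFieldType) m (A : 'M[R]_m) (x : 'cV[R]_m) : R :=
  (x^T *m A *m x) 0 0.

(* Main.v *)
Require Import Defs.
From mathcomp Require Import all_boot all_order all_algebra.
From mathcomp Require Import ring lra.
Import Order.TTheory GRing.Theory Num.Theory.
Local Open Scope ring_scope.

Lemma bigmax0_ge (R : realFieldType) (I : finType) {P : pred I} (F : I -> R) i0 :
  P i0 -> F i0 <= \big[Num.max/0]_(i | P i) F i.
Proof. move=> Pi; by apply: (le_bigmax_seq _ i0) => //; exact: mem_index_enum. Qed.

Lemma bigmax0_ge0 (R : realFieldType) (I : finType) (P : pred I) (F : I -> R) :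
  0 <= \big[Num.max/0]_(i | P i) F i.
Proof. exact: bigmax_ge_id. Qed.

Lemma gammaBT_ge0 (R : realFieldType) k (rk : 'I_k -> nat) (G : 'M[R]_k) :
  0 <= gamma_BT rk G.
Proof. exact: bigmax0_ge0. Qed.

Lemma gammaBG_ge0 (R : realFieldType) k p (g : 'I_k -> 'I_p) rk (G : 'M[R]_k) :
  0 <= gamma_BG g rk G.
Proof. exact: bigmax0_ge0. Qed.

Lemma gammaBT_ge (R : realFieldType) k (rk : 'I_k -> nat) (G : 'M[R]_k) l l' :
  rk l != rk l' -> `|G l l'| <= gamma_BT rk G.
Proof.
move=> h; rewrite /gamma_BT.
apply: le_trans; last by apply: bigmax0_ge; [exact: l|done].
by apply: bigmax0_ge.
Qed.

Lemma gammaBG_ge (R : realFieldType) k p (g : 'I_k -> 'I_p) rk (G : 'M[R]_k) l l' :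
  g l != g l' -> rk l == rk l' -> `|G l l'| <= gamma_BG g rk G.
Proof.
move=> h1 h2; rewrite /gamma_BG.
apply: le_trans; last by apply: bigmax0_ge; [exact: l|done].
by apply: bigmax0_ge; rewrite h1 h2.
Qed.

Lemma GramC (R : realFieldType) n k (X : 'M[R]_(n, k)) i j : Gram X i j = Gram X j i.
Proof. rewrite /Gram !mxE; apply: eq_bigr => l _; by rewrite !mxE mulrC. Qed.

Lemma qformE (R : realFieldType) m (A : 'M[R]_m) (x : 'cV[R]_m) :
  qform A x = \sum_a \sum_b x a 0 * x b 0 * A a b.
Proof.
rewrite /qform mxE exchange_big /=; apply: eq_bigr => b _.
rewrite mxE mulr_suml; apply: eq_bigr => a _; rewrite !mxE; ring.
Qed.

Lemma amgm2 (R : realFieldType) (u v : R) : 2 * (`|u| * `|v|) <= u ^+ 2 + v ^+ 2.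
Proof.
have h1 := real_normK (num_real u); have h2 := real_normK (num_real v).
have h3 := sqr_ge0 (`|u| - `|v|).
rewrite -h1 -h2; move: h3; rewrite !expr2; nra.
Qed.

Lemma le_addl (R : realFieldType) (x y z : R) : 0 <= y -> x <= z -> x <= y + z.
Proof. lra. Qed.
Lemma le_addr (R : realFieldType) (x y z : R) : x <= y -> 0 <= z -> x <= y + z.
Proof. lra. Qed.

Lemma row_bound (R : realFieldType) (n k p : nat) (g : 'I_k -> 'I_p) (rk : 'I_k -> nat)
  (X : 'M[R]_(n, k)) (I : {set 'I_k}) :
  is_group_partition g rk -> forall a : 'I_#|I|,
  \sum_b (if a == b then 0 else `|subGram (Gram X) I a b|) <= tau g rk (Gram X) I.
Proof.
move=> [_ [_ part]] a.
pose S := [set b : 'I_#|I| | (rk (enum_val b) == rk (enum_val a)) &&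
                           (g (enum_val b) != g (enum_val a))].
have hBT : 0 <= gamma_BT rk (Gram X) := gammaBT_ge0 _ _ _ _.
have hBG : 0 <= gamma_BG g rk (Gram X) := gammaBG_ge0 _ _ _ _ _ _.
apply: (@le_trans _ _ (\sum_(b < #|I|) (gamma_BT rk (Gram X) +
          (if b \in S then gamma_BG g rk (Gram X) else 0)))).
  apply: ler_sum => b _.
  case: eqP => [_|/eqP nab]; first by apply: addr_ge0 => //; case: ifP.
  rewrite mxE.
  case: (eqVneq (rk (enum_val a)) (rk (enum_val b))) => hr.
    have hg : g (enum_val a) != g (enum_val b).
      apply/eqP => hg; move/eqP: nab; apply; apply: enum_val_inj; exact: part.
    have -> : b \in S by rewrite inE hr eqxx eq_sym hg.
    exact: le_addl (@gammaBG_ge _ _ _ g rk (Gram X) _ _ hg (introT eqP hr)).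
  apply: le_addr (@gammaBT_ge _ _ rk (Gram X) _ _ hr) _; by case: ifP.
rewrite big_split /= -big_mkcond !sumr_const card_ord /tau !mulr_natl.
rewrite lerD2l; apply: ler_wpMn2l => //.
rewrite -(@card_in_imset _ _ (fun b => g (enum_val b))).
  apply: subset_leq_card; apply/subsetP => y /imsetP [b _ ->].
  apply: imset_f; exact: enum_valP.
move=> b1 b2; rewrite !inE => /andP[r1 _] /andP[r2 _] heq.
apply: enum_val_inj; apply: part => //; by rewrite (eqP r1) (eqP r2).
Qed.

Lemma subGramE (R : realFieldType) k (G : 'M[R]_k) (I : {set 'I_k}) a b :
  subGram G I a b = G (enum_val a) (enum_val b).
Proof. by rewrite /subGram mxE. Qed.

Theorem lemma1 (R : realFieldType) (n k p : nat) (g : 'I_k -> 'I_p) (rk : 'I_k -> nat)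
  (X : 'M[R]_(n, k)) (nu : R) (I : {set 'I_k}) :
  is_group_partition g rk ->
  (forall l : 'I_k, Gram X l l = 1) ->
  0 < nu -> nu < 1 ->
  tau g rk (Gram X) I <= nu ->
  forall x : 'cV[R]_#|I|,
    sqnorm x * (1 - nu) <= qform (subGram (Gram X) I) x /\
    qform (subGram (Gram X) I) x <= sqnorm x * (1 + nu).
Proof.
move=> hpart hdiag nu0 nu1 htau x.
set A := subGram (Gram X) I.
pose c (a b : 'I_#|I|) := if a == b then 0 else `|A a b|.
have cC a b : c a b = c b a.
  rewrite /c eq_sym; case: eqP => // _; by rewrite /A !subGramE GramC.
have rowb a : \sum_b c a b <= nu := le_trans (@row_bound _ _ _ _ g rk X I hpart a) htau.
pose Off := \sum_a \sum_b (if a == b then 0 else x a 0 * x b 0 * A a b).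
have qE : qform A x = sqnorm x + Off.
  rewrite qformE /sqnorm /Off -big_split /=; apply: eq_bigr => a _.
  rewrite (bigD1 a) //= [in RHS](bigD1 a) //= eqxx add0r /A subGramE hdiag mulr1 expr2.
  congr (_ + _); apply: eq_bigr => b /negbTE; by rewrite eq_sym => ->.
have hOff : 2 * `|Off| <= 2 * (nu * sqnorm x).
  apply: (@le_trans _ _ (2 * \sum_a \sum_b `|if a == b then 0 else x a 0 * x b 0 * A a b|)).
    rewrite ler_pM2l //; apply: le_trans (ler_norm_sum _ _ _) _.
    apply: ler_sum => a _; exact: ler_norm_sum.
  rewrite mulr_sumr.
  apply: (@le_trans _ _ (\sum_a \sum_b (x a 0 ^+ 2 + x b 0 ^+ 2) * c a b)).
    apply: ler_sum => a _; rewrite mulr_sumr; apply: ler_sum => b _.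
    rewrite /c; case: eqP => _; first by rewrite normr0 mulr0 mulr0.
    rewrite !normrM mulrA; apply: ler_wpM2r => //; exact: amgm2.
  have -> : \sum_a \sum_b (x a 0 ^+ 2 + x b 0 ^+ 2) * c a b =
            2 * \sum_a x a 0 ^+ 2 * \sum_b c a b.
    under eq_bigr => a _ do under eq_bigr => b _ do rewrite mulrDl.
    under eq_bigr => a _ do rewrite big_split /=.
    rewrite big_split /= [X in _ + X]exchange_big /=.
    rewrite mulr2n mulrDl mul1r; apply: f_equal2.
      by apply: eq_bigr => a _; rewrite mulr_sumr.
    by apply: eq_bigr => a _; rewrite mulr_sumr; apply: eq_bigr => b _; rewrite cC.
  rewrite ler_pM2l // /sqnorm mulr_sumr; apply: ler_sum => a _.
  by rewrite mulrC; apply: ler_wpM2r; [exact: sqr_ge0|exact: rowb].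
rewrite qE; clear qE.
have s0 : 0 <= sqnorm x by apply: sumr_ge0 => a _; exact: sqr_ge0.
move: hOff; rewrite ler_pM2l // => /ler_normlP [h1 h2].
move: (sqnorm x) Off h1 h2 => s o h1 h2; split; lra.
Qed.
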